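(* Let $H_0,H_1\in\mathbb{C}^{d\times d}$ with $H_0$ invertible, put $P_0=H_0H_0^*+H_1H_1^*$, $P_1=H_0H_1^*$, $P(z)=P_1^*z^{-1}+P_0+P_1z$ (so $P(z)=H(z)H(z)^*$ with $H(z)=H_0+H_1z^{-1}$), $\bar X=H_0H_0^*$ and $A=H_1H_0^{-1}$. Define $g(X)=P_0-P_1^*X^{-1}P_1$ on invertible $d\times d$ matrices. Then: (a) $g(\bar X)=\bar X$, i.e. $\bar X$ solves $X=P_0-P_1^*X^{-1}P_1$, and $H_1=P_1^*H_0^{-*}$; (b) the derivative of $g$ at $\bar X$, written in vectorized form (the matrix $J\in\mathbb{C}^{d^2\times d^2}$ with $\mathrm{vec}(Dg(\bar X)[E])=J\,\mathrm{vec}(E)$ for all $E$), equals $J=\overline{A}\otimes A$; (c) if $\det P(\theta)=0$ for some $\theta\in\mathbb{C}$ with $|\theta|=1$, then $1$ is an eigenvalue of $J$; (d) conversely, if the spectral radius of $A$ is at most $1$ and $1$ is an eigenvalue of $J$, then $\det P(\theta)=0$ for some $|\theta|=1$. Consequently, under $\rho(A)\le 1$, $\det P$ vanishes somewhere on the unit circle iff $\rho(J)=1$ iff the derivative $I-J$ of $f(X)=X-g(X)$ at $\bar X$ is singular.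
   Context: $A^*$ is the conjugate transpose, $\overline{A}$ the entrywise complex conjugate, $A^{-*}=(A^* )^{-1}$, $\otimes$ the Kronecker product, and $\mathrm{vec}$ stacks the columns of a matrix into a vector (so $\mathrm{vec}(ABC)=(C^T\otimes A)\mathrm{vec}(B)$). $\rho(\cdot)$ denotes spectral radius. *)

(* Defs.v *)
(* complex numbers are R[i] = complex R for a real closed field R
   (R = Stdlib reals gives the usual complex field C). *)
From HB Require Import structures.
From mathcomp Require Import all_boot all_order all_algebra.
From mathcomp Require Import complex mxtens.
Set Implicit Arguments. Unset Strict Implicit. Unset Printing Implicit Defensive.
Import Order.TTheory GRing.Theory Num.Theory.
Local Open Scope ring_scope.

Section Defs.
Variable R : rcfType.
Local Notation C := R[i].

Definition ctrmx m n (A : 'M[C]_(m, n)) : 'M[C]_(n, m) := map_mx (@conjc R) A^T.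
Definition cconjmx m n (A : 'M[C]_(m, n)) : 'M[C]_(m, n) := map_mx (@conjc R) A.

(* Kronecker product: (A \otimes B) ((i1,i2),(j1,j2)) = A i1 j1 * B i2 j2, with
   the standard index (i1,i2) |-> i1 * p + i2 (mathcomp-real-closed's tensmx). *)
Definition kron m n p q (A : 'M[C]_(m, n)) (B : 'M[C]_(p, q)) : 'M[C]_(m * p, n * q) :=
  tensmx A B.

(* vec: stacks the columns; entry of index j * m + i is A i j, so that
   vec (A X B) = (B^T \otimes A) vec X. *)
Definition vec m n (A : 'M[C]_(m, n)) : 'cV[C]_(n * m) :=
  \col_k A (mxtens_unindex k).2 (mxtens_unindex k).1.

(* entrywise l1 norm on matrices (all norms are equivalent in finite dimension) *)
Definition mxnorm m n (E : 'M[C]_(m, n)) : C := \sum_i \sum_j `|E i j|.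

Definition frechet_deriv m n p q (g : 'M[C]_(m, n) -> 'M[C]_(p, q)) (X : 'M[C]_(m, n))
  (L : 'M[C]_(m, n) -> 'M[C]_(p, q)) : Prop :=
  (forall a E1 E2, L (a *: E1 + E2) = a *: L E1 + L E2) /\
  forall eps : C, 0 < eps -> exists2 delta : C, 0 < delta &
    forall E, mxnorm E < delta ->
      mxnorm (g (X + E) - g X - L E) <= eps * mxnorm E.

Definition spec_rad_le n (A : 'M[C]_n) (r : R) : Prop :=
  forall l, eigenvalue A l -> `|l| <= (r%:C)%C.

Definition spec_rad_eq n (A : 'M[C]_n) (r : R) : Prop :=
  spec_rad_le A r /\ exists2 l, eigenvalue A l & `|l| = (r%:C)%C.

End Defs.

(* Main.v *)
Require Import Defs.
From HB Require Import structures.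
From mathcomp Require Import all_boot all_order all_algebra.
From mathcomp Require Import complex mxtens.
From mathcomp Require Import ring.
Import Order.TTheory GRing.Theory Num.Theory.
Local Open Scope ring_scope.
Set Implicit Arguments. Unset Strict Implicit.

Section H.
Variable R : rcfType.
Local Notation C := R[i].
Local Notation cj := (@conjc R).

Lemma ctrmxE m n (A : 'M[C]_(m, n)) i j : ctrmx A i j = cj (A j i).
Proof. by rewrite /ctrmx !mxE. Qed.

Lemma ctrmxM m n p (A : 'M[C]_(m, n)) (B : 'M[C]_(n, p)) :
  ctrmx (A *m B) = ctrmx B *m ctrmx A.
Proof. by rewrite /ctrmx trmx_mul map_mxM. Qed.

Lemma ctrmxK m n (A : 'M[C]_(m, n)) : ctrmx (ctrmx A) = A.
Proof. by apply/matrixP=> i j; rewrite !ctrmxE conjcK. Qed.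

Lemma ctrmxD m n (A B : 'M[C]_(m, n)) : ctrmx (A + B) = ctrmx A + ctrmx B.
Proof. by apply/matrixP=> i j; rewrite !mxE rmorphD. Qed.

Lemma ctrmxN m n (A : 'M[C]_(m, n)) : ctrmx (- A) = - ctrmx A.
Proof. by apply/matrixP=> i j; rewrite !mxE rmorphN. Qed.

Lemma ctrmxZ m n a (A : 'M[C]_(m, n)) : ctrmx (a *: A) = cj a *: ctrmx A.
Proof. by apply/matrixP=> i j; rewrite !mxE rmorphM. Qed.

Lemma ctrmx1 n : ctrmx (1%:M : 'M[C]_n) = 1%:M.
Proof. by rewrite /ctrmx trmx1 map_scalar_mx rmorph1. Qed.

Lemma det_ctrmx n (A : 'M[C]_n) : \det (ctrmx A) = cj (\det A).
Proof. by rewrite /ctrmx det_map_mx det_tr. Qed.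

Lemma ctrmx_unit n (A : 'M[C]_n) : (ctrmx A \in unitmx) = (A \in unitmx).
Proof. by rewrite !unitmxE !unitfE det_ctrmx conjc_eq0. Qed.

Lemma ctrmx_inv n (A : 'M[C]_n) : ctrmx (invmx A) = invmx (ctrmx A).
Proof. by rewrite /ctrmx trmx_inv map_invmx. Qed.


Lemma vecE m n (E : 'M[C]_(m, n)) i j : vec E (mxtens_index (j, i)) 0 = E i j.
Proof. by rewrite /vec mxE mxtens_indexK. Qed.

Lemma vec_inj m n (E F : 'M[C]_(m, n)) : vec E = vec F -> E = F.
Proof. by move=> h; apply/matrixP=> i j; rewrite -[E i j]vecE -[F i j]vecE h. Qed.

Lemma vec_surj m n (x : 'cV[C]_(n * m)) : exists E : 'M[C]_(m, n), vec E = x.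
Proof.
exists (\matrix_(i, j) x (mxtens_index (j, i)) 0).
apply/matrixP=> k l; rewrite ord1 /vec !mxE.
by rewrite -surjective_pairing mxtens_unindexK.
Qed.

Lemma vecZ m n a (E : 'M[C]_(m, n)) : vec (a *: E) = a *: vec E.
Proof. by apply/matrixP=> k l; rewrite !mxE. Qed.

Lemma vec0 m n : vec (0 : 'M[C]_(m, n)) = 0.
Proof. by apply/matrixP=> k l; rewrite !mxE. Qed.

Lemma sum_tens (d : nat) (F : 'I_(d * d) -> C) :
  \sum_k F k = \sum_(a < d) \sum_(b < d) F (mxtens_index (a, b)).
Proof.
rewrite (reindex (@mxtens_index d d)) /=; last first.
  by apply: onW_bij; exists (@mxtens_unindex d d); [apply: mxtens_indexK|apply: mxtens_unindexK].
by rewrite pair_big /=; apply: eq_bigr => -[a b].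
Qed.

Lemma Jvec d (A E : 'M[C]_d) :
  kron (cconjmx A) A *m vec E = vec (A *m E *m ctrmx A).
Proof.
apply/matrixP=> k l; rewrite ord1; case: (mxtens_indexP k) => c r.
rewrite vecE !mxE sum_tens.
rewrite (eq_bigr (fun a => \sum_b cj (A c a) * A r b * E b a)); last first.
  move=> a _; apply: eq_bigr => b _; rewrite /kron tensmxE vecE /cconjmx mxE //.
apply: eq_bigr => a _.
rewrite mxE big_distrl /=; apply: eq_bigr => b _.
by rewrite !mxE [RHS]mulrC mulrA.
Qed.


Lemma notunit_ker n (M : 'M[C]_n) :
  M \notin unitmx -> exists2 x : 'cV_n, x != 0 & M *m x = 0.
Proof.
rewrite -unitmx_tr -row_free_unit -kermx_eq0 => nz.
exists (nz_row (kermx M^T))^T; first by rewrite trmx_eq0 nz_row_eq0.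
apply: trmx_inj; rewrite trmx_mul trmxK trmx0.
by apply/sub_kermxP; apply: nz_row_sub.
Qed.

Lemma ker_notunit n (M : 'M[C]_n) (x : 'cV_n) :
  x != 0 -> M *m x = 0 -> M \notin unitmx.
Proof.
move=> nx hx; apply/negP => uM; move/eqP: nx; apply.
by rewrite -(mulKmx uM x) hx mulmx0.
Qed.

Lemma eigen_unit n (M : 'M[C]_n) a : eigenvalue M a = ((M - a%:M) \notin unitmx).
Proof. by rewrite /eigenvalue /eigenspace kermx_eq0 row_free_unit. Qed.

Lemma eigen_colP n (M : 'M[C]_n) a :
  eigenvalue M a <-> exists2 x : 'cV_n, x != 0 & M *m x = a *: x.
Proof.
rewrite eigen_unit; split.
  move/notunit_ker=> [x nx hx]; exists x => //.
  by apply/eqP; rewrite -subr_eq0 -mul_scalar_mx -mulmxBl hx.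
move=> [x nx hx]; apply: (ker_notunit nx).
by rewrite mulmxBl mul_scalar_mx hx subrr.
Qed.

Lemma eigenJ d (A : 'M[C]_d) l :
  eigenvalue (kron (cconjmx A) A) l <->
  exists2 E : 'M_d, E != 0 & A *m E *m ctrmx A = l *: E.
Proof.
rewrite eigen_colP; split.
  move=> [x nx hx]; have [E hE] := vec_surj x; exists E.
    by apply: contraNneq nx => E0; rewrite -hE E0 vec0.
  by apply: vec_inj; rewrite -Jvec vecZ hE.
move=> [E nE hE]; exists (vec E).
  by apply: contraNneq nE => h; apply/eqP/vec_inj; rewrite h vec0.
by rewrite Jvec hE vecZ.
Qed.


Lemma ctrmx0 m n : ctrmx (0 : 'M[C]_(m, n)) = 0.
Proof. by apply/matrixP=> i j; rewrite !mxE conjc0. Qed.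

Lemma ctrmx_sum m n (I : Type) (r : seq I) (P : pred I) (F : I -> 'M[C]_(m, n)) :
  ctrmx (\sum_(i <- r | P i) F i) = \sum_(i <- r | P i) ctrmx (F i).
Proof. exact: (big_morph _ (@ctrmxD m n) (@ctrmx0 m n)). Qed.

Lemma ctrmxX n (A : 'M[C]_n.+1) k : ctrmx (A ^+ k) = ctrmx A ^+ k.
Proof.
elim: k => [|k IH]; first by rewrite !expr0 ctrmx1.
by rewrite exprS exprSr -!mulmxE ctrmxM IH.
Qed.

Lemma powJ n (A E : 'M[C]_n.+1) l k : A *m E *m ctrmx A = l *: E ->
  A ^+ k *m E *m ctrmx A ^+ k = l ^+ k *: E.
Proof.
move=> h; elim: k => [|k IH]; first by rewrite !expr0 mul1mx mulmx1 scale1r.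
rewrite exprS exprSr -!mulmxE !mulmxA -(mulmxA A) -(mulmxA A) IH.
by rewrite -scalemxAr -scalemxAl h scalerA exprSr.
Qed.


Lemma key n (A E : 'M[C]_n.+1) l : l != 0 -> E != 0 ->
  A *m E *m ctrmx A = l *: E ->
  exists mu nu, [/\ root (char_poly A) mu, root (char_poly A) nu & l = nu * cj mu].
Proof.
move=> nl nE hE.
set p := char_poly A.
set a := fun k => p`_k.
have sp : size p = n.+2 by rewrite size_char_poly.
have pE : p = \sum_(k < n.+2) a k *: 'X^k by rewrite -{1}(coefK p) sp poly_def.
have aN : a n.+1 = 1.
  by have := char_poly_monic A; rewrite qualifE /= lead_coefE sp => /eqP.
set B := ctrmx A.
have h1 : \sum_(k < n.+2) (a k * l ^+ k) *: (E *m B ^+ (n.+1 - k)) = 0.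
  transitivity (horner_mx A p *m E *m B ^+ n.+1); last by rewrite Cayley_Hamilton !mul0mx.
  rewrite [in RHS]pE rmorph_sum !mulmx_suml; apply: eq_bigr => k _.
  rewrite -mul_polyC rmorphM /= horner_mx_C rmorphXn /= horner_mx_X -mulmxE mul_scalar_mx.
  have kN : (k <= n.+1)%N by rewrite -ltnS ltn_ord.
  have -> : B ^+ n.+1 = B ^+ k * B ^+ (n.+1 - k) by rewrite -exprD subnKC.
  by rewrite -mulmxE mulmxA -!scalemxAl (powJ _ hE) -!scalemxAl scalerA.
set r := \sum_(k < n.+2) cj (a k * l ^+ k) *: ('X^(n.+1 - k) : {poly C}).
have h2 : horner_mx A r *m ctrmx E = 0.
  rewrite -(ctrmx0 n.+1 n.+1) -h1 ctrmx_sum.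
  rewrite rmorph_sum mulmx_suml; apply: eq_bigr => k _.
  by rewrite ctrmxZ ctrmxM ctrmxX ctrmxK -mul_polyC rmorphM /= horner_mx_C rmorphXn /= horner_mx_X -mulmxE mul_scalar_mx -scalemxAl.
have ncop : ~~ coprimep p r.
  apply/negP => /Bezout_eq1_coprimepP [[u v] /= huv].
  have : horner_mx A (u * p + v * r) *m ctrmx E = ctrmx E by rewrite huv rmorph1 mul1mx.
  rewrite rmorphD !rmorphM /= Cayley_Hamilton mulr0 add0r -mulmxE -mulmxA h2 mulmx0.
  move=> h0; move/eqP: nE; apply.
  by rewrite -(ctrmxK E) -h0 ctrmx0.
have [mu] : exists mu, root (gcdp p r) mu.
  by apply/closed_rootP; rewrite -coprimep_def.
rewrite root_gcd => /andP [pmu rmu].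
have rE : forall x, r.[x] = \sum_(k < n.+2) cj (a k * l ^+ k) * x ^+ (n.+1 - k).
  by move=> x; rewrite /r horner_sum; apply: eq_bigr => k _; rewrite hornerZ hornerXn.
have mu0 : mu != 0.
  apply: contraTneq rmu => ->; rewrite /root rE big_ord_recr /= subnn expr0 mulr1.
  rewrite big1 ?add0r; first by rewrite aN mul1r rmorphXn /= expf_neq0 ?conjc_eq0.
  move=> k _; rewrite expr0n /=.
  have -> : (n.+1 - k == 0)%N = false by rewrite subn_eq0 leqNgt ltn_ord.
  by rewrite mulr0.
exists mu, (l / cj mu); split => //; last by rewrite divfK ?conjc_eq0.
have cjmu : cj mu != 0 by rewrite conjc_eq0.
have : cj (r.[mu]) = cj mu ^+ n.+1 * p.[l / cj mu].
  rewrite rE rmorph_sum [in RHS]pE horner_sum mulr_sumr; apply: eq_bigr => k _.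
  rewrite hornerZ hornerXn !rmorphM /= conjcK !rmorphXn /= conjcK.
  have kN : (k <= n.+1)%N by rewrite -ltnS ltn_ord.
  have -> : cj mu ^+ n.+1 = cj mu ^+ k * cj mu ^+ (n.+1 - k) by rewrite -exprD subnKC.
  rewrite -{1}(divfK cjmu l) exprMn; ring.
move/eqP: rmu => ->; rewrite conjc0 => /esym /eqP.
by rewrite mulf_eq0 expf_eq0 (negbTE cjmu) andbF /= => /eqP h; apply/eqP.
Qed.


Lemma key2 n (A E : 'M[C]_n) l : spec_rad_le A 1 -> l != 0 -> E != 0 ->
  A *m E *m ctrmx A = l *: E -> exists2 nu, eigenvalue A nu & `|l| <= `|nu| <= 1.
Proof.
case: n A E => [|n] A E sA nl nE h; first by rewrite [E]flatmx0 eqxx in nE.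
have [mu [nu [pmu pnu ->]]] := key nl nE h.
have hmu : `|mu| <= 1 by have := sA mu; rewrite eigenvalue_root_char; apply.
have hnu : `|nu| <= 1 by have := sA nu; rewrite eigenvalue_root_char; apply.
exists nu; first by rewrite eigenvalue_root_char.
rewrite hnu andbT normrM normcJ.
by rewrite -{2}(mulr1 `|nu|) ler_wpM2l.
Qed.

Lemma invmxM n (X Y : 'M[C]_n) : X \in unitmx -> Y \in unitmx ->
  invmx (X *m Y) = invmx Y *m invmx X.
Proof.
move=> uX uY; have uXY : X *m Y \in unitmx by rewrite unitmx_mul uX uY.
have h : X *m Y *m (invmx Y *m invmx X) = 1%:M.
  by rewrite mulmxA -(mulmxA X) mulmxV // mulmx1 mulmxV.
by rewrite -[RHS](mulKmx uXY) h mulmx1.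
Qed.

Lemma eig_circle n (A : 'M[C]_n) t : t != 0 ->
  (\det (1%:M + t^-1 *: A) == 0) = eigenvalue A (- t).
Proof.
move=> nt; rewrite eigen_unit unitmxE unitfE negbK.
have -> : 1%:M + t^-1 *: A = t^-1 *: (A - (- t)%:M).
  by rewrite scalerBr scale_scalar_mx mulrN mulVf // raddfN /= opprK addrC.
by rewrite detZ mulf_eq0 expf_eq0 invr_eq0 (negbTE nt) andbF.
Qed.

Lemma perm4 (V : zmodType) (a b c e : V) : a + (b + c) + e = b + e + (a + c).
Proof. by rewrite addrCA addrAC. Qed.

Lemma PHH d (H0 H1 : 'M[C]_d) t : `|t| = 1 ->
  t^-1 *: ctrmx (H0 *m ctrmx H1) + (H0 *m ctrmx H0 + H1 *m ctrmx H1)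
    + t *: (H0 *m ctrmx H1)
  = (H0 + t^-1 *: H1) *m ctrmx (H0 + t^-1 *: H1).
Proof.
move=> nt; have t0 : t != 0 by rewrite -normr_eq0 nt oner_eq0.
have ct : cj t^-1 = t.
  have := sqr_normc t; rewrite nt expr1n => /esym h.
  have ct1 : cj t = t^-1 by apply: (mulfI t0); rewrite h mulfV.
  by rewrite conjc_inv ct1 invrK.
rewrite ctrmxD ctrmxZ ct !mulmxDl !mulmxDr ctrmxM ctrmxK.
rewrite -!scalemxAl -!scalemxAr scalerA mulVf //= scale1r.
by rewrite perm4.
Qed.


Lemma detP_eig d (H0 H1 : 'M[C]_d) t : H0 \in unitmx -> `|t| = 1 ->
  (\det (t^-1 *: ctrmx (H0 *m ctrmx H1) + (H0 *m ctrmx H0 + H1 *m ctrmx H1)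
    + t *: (H0 *m ctrmx H1)) == 0) = eigenvalue (H1 *m invmx H0) (- t).
Proof.
move=> uH0 nt; have t0 : t != 0 by rewrite -normr_eq0 nt oner_eq0.
rewrite (PHH H0 H1 nt) det_mulmx det_ctrmx mulf_eq0 conjc_eq0 orbb -(eig_circle (H1 *m invmx H0) t0).
have -> : H0 + t^-1 *: H1 = (1%:M + t^-1 *: (H1 *m invmx H0)) *m H0.
  by rewrite mulmxDl mul1mx -scalemxAl mulmxKV.
rewrite det_mulmx mulf_eq0.
by move: uH0; rewrite unitmxE unitfE => /negbTE ->; rewrite orbF.
Qed.

Lemma eigJ_circle d (A : 'M[C]_d) nu : eigenvalue A nu -> `|nu| = 1 ->
  eigenvalue (kron (cconjmx A) A) 1.
Proof.
move=> /eigen_colP [x nx hx] nnu; apply/eigenJ; exists (x *m ctrmx x).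
  move/matrix0Pn: nx => [i [j]]; rewrite [j]ord1 => hxi.
  apply/matrix0Pn; exists i, i; rewrite mxE big_ord1 ctrmxE -sqr_normc.
  by rewrite expf_neq0 // normr_eq0.
rewrite mulmxA -mulmxA -ctrmxM hx ctrmxZ -scalemxAr -scalemxAl scalerA mulrC -sqr_normc nnu.
by rewrite expr1n scale1r.
Qed.


Lemma le_sum1 (I : finType) (F : I -> C) i : (forall j, 0 <= F j) -> F i <= \sum_j F j.
Proof. by move=> h; rewrite (bigD1 i) //= lerDl; apply: sumr_ge0 => j _; exact: h. Qed.

Lemma mxnorm_ge0 m n (E : 'M[C]_(m, n)) : 0 <= mxnorm E.
Proof. by apply: sumr_ge0 => i _; apply: sumr_ge0 => j _. Qed.

Lemma mxnorm_eq0 m n (E : 'M[C]_(m, n)) : mxnorm E = 0 -> E = 0.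
Proof.
move=> h; apply/matrixP=> i j; rewrite mxE.
have hi : \sum_j0 `|E i j0| = 0.
  by apply: (psumr_eq0P _ h) => // k _; apply: sumr_ge0 => l _.
apply/eqP; rewrite -normr_eq0; apply/eqP.
by apply: (psumr_eq0P _ hi) => // k _.
Qed.

Lemma mxnormD m n (E F : 'M[C]_(m, n)) : mxnorm (E + F) <= mxnorm E + mxnorm F.
Proof.
rewrite /mxnorm -big_split /=; apply: ler_sum => i _.
rewrite -big_split /=; apply: ler_sum => j _; rewrite mxE; exact: ler_normD.
Qed.

Lemma mxnormN m n (E : 'M[C]_(m, n)) : mxnorm (- E) = mxnorm E.
Proof. by apply: eq_bigr => i _; apply: eq_bigr => j _; rewrite mxE normrN. Qed.

Lemma mxnormZ m n a (E : 'M[C]_(m, n)) : mxnorm (a *: E) = `|a| * mxnorm E.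
Proof.
rewrite /mxnorm mulr_sumr; apply: eq_bigr => i _.
by rewrite mulr_sumr; apply: eq_bigr => j _; rewrite mxE normrM.
Qed.

Lemma mxnormM m n p (M : 'M[C]_(m, n)) (N : 'M[C]_(n, p)) :
  mxnorm (M *m N) <= mxnorm M * mxnorm N.
Proof.
apply: (@le_trans _ _ (\sum_i \sum_k `|M i k| * \sum_j `|N k j|)).
  apply: ler_sum => i _.
  apply: (@le_trans _ _ (\sum_j \sum_k `|M i k| * `|N k j|)).
    by apply: ler_sum => j _; rewrite mxE; apply: (le_trans (ler_norm_sum _ _ _));
       apply: ler_sum => k _; rewrite normrM.
  by rewrite exchange_big /=; apply: ler_sum => k _; rewrite mulr_sumr.
rewrite /mxnorm mulr_suml; apply: ler_sum => i _; rewrite mulr_suml.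
apply: ler_sum => k _; apply: ler_wpM2l => //.
by rewrite [X in _ <= X](bigD1 k) //= lerDl; apply: sumr_ge0 => k0 _; apply: sumr_ge0.
Qed.


Lemma lin_ineq (x b w : C) : 0 <= x -> 2 * w <= 1 -> x <= b + w * x -> x <= 2 * b.
Proof.
move=> x0 hw h.
have h1 : 2 * x <= 2 * b + (2 * w) * x by rewrite -mulrA -mulrDr ler_wpM2l.
have h2 : (2 * w) * x <= x by rewrite -{2}(mul1r x) ler_wpM2r.
have : 2 * x <= 2 * b + x by apply: (le_trans h1); rewrite lerD2l.
by rewrite mulr_natl mulr2n lerD2r.
Qed.

Lemma inv_bound n (W : 'M[C]_n) : 2 * mxnorm W <= 1 ->
  (1%:M + W) \in unitmx /\ mxnorm (invmx (1%:M + W)) <= 2 * mxnorm (1%:M : 'M[C]_n).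
Proof.
move=> hW.
have key0 : forall m (Z B : 'M[C]_(n, m)), Z = B - W *m Z -> mxnorm Z <= 2 * mxnorm B.
  move=> m Z B hZ; apply: lin_ineq (mxnorm_ge0 _) hW _.
  by rewrite {1}hZ; apply: (le_trans (mxnormD _ _)); rewrite mxnormN lerD2l mxnormM.
have uW : (1%:M + W) \in unitmx.
  have [//|/notunit_ker [x nx hx]] := boolP (1%:M + W \in unitmx); exfalso; move/eqP: nx; apply.
  apply: mxnorm_eq0; apply/eqP; rewrite eq_le mxnorm_ge0 andbT.
  have -> : 0 = 2 * mxnorm (0 : 'cV[C]_n) by rewrite /mxnorm big1 ?mulr0 // => i _; rewrite big1 // => j _; rewrite mxE normr0.
  apply: key0; rewrite sub0r; apply/eqP; rewrite -subr_eq0 opprK.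
  by rewrite -[X in X + _]mul1mx -mulmxDl hx.
split => //; apply: key0.
apply/eqP; rewrite eq_sym subr_eq -[X in _ == X + _]mul1mx -mulmxDl.
by rewrite mulmxV.
Qed.


Lemma zmod_rem (V : zmodType) (p a b c : V) : p - (a - b) - (p - a) - c = b - c.
Proof. by rewrite !opprB !addrA subrK [p + b]addrC addrK. Qed.


Lemma frechet_g d (X Q1 Q2 P0 : 'M[C]_d) : X \in unitmx ->
  frechet_deriv (fun Y => P0 - Q1 *m invmx Y *m Q2) X
    (fun E => Q1 *m invmx X *m E *m invmx X *m Q2).
Proof.
move=> uX; split.
  move=> a E1 E2 /=.
  by rewrite mulmxDr !mulmxDl -scalemxAr -!scalemxAl.
move=> eps eps0.
set Xi := invmx X; set K := mxnorm Xi.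
have K0 : 0 <= K by apply: mxnorm_ge0.
set n1 := mxnorm (1%:M : 'M[C]_d).
have n10 : 0 <= n1 by apply: mxnorm_ge0.
set c1 := 2 * (K + 1).
set M := mxnorm Q1 * (2 * n1 * K) * K * K * mxnorm Q2.
have M0 : 0 <= M.
  by rewrite /M !mulr_ge0 ?mxnorm_ge0 ?ler0n.
set c2 := M + 1.
have c10 : 0 < c1 by rewrite /c1 mulr_gt0 ?ltr0n // ltr_wpDl.
have c20 : 0 < c2 by rewrite /c2 ltr_wpDl.
have cc : 0 < c1 + c2 / eps by rewrite addr_gt0 // divr_gt0.
exists (c1 + c2 / eps)^-1; first by rewrite invr_gt0.
move=> E hE /=.
set nE := mxnorm E.
have nE0 : 0 <= nE by apply: mxnorm_ge0.
have hEc : nE * c1 + nE * c2 / eps < 1.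
  by rewrite -mulrA -mulrDr -ltr_pdivlMr // div1r.
have t1 : 0 <= nE * c2 / eps by rewrite divr_ge0 ?mulr_ge0 // ltW.
have t2 : 0 <= nE * c1 by rewrite mulr_ge0 // ltW.
have hE1 : nE * c1 <= 1.
  by apply: ltW; apply: le_lt_trans hEc; rewrite lerDl.
have hE2 : nE * M <= eps.
  have : nE * c2 / eps <= 1 by apply: ltW; apply: le_lt_trans hEc; rewrite lerDr.
  rewrite ler_pdivrMr // mul1r; apply: le_trans.
  by rewrite ler_wpM2l // /c2 lerDl.
set W := Xi *m E.
have hW : 2 * mxnorm W <= 1.
  apply: le_trans hE1; rewrite /c1 mulrCA ler_wpM2l ?ler0n //.
  apply: (le_trans (mxnormM _ _)); rewrite mulrC ler_wpM2l //.
  by rewrite lerDl.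
have [uW hZ] := inv_bound hW.
have XE : X + E = X *m (1%:M + W) by rewrite mulmxDr mulmx1 /W mulKVmx.
have uXE : X + E \in unitmx by rewrite XE unitmx_mul uX.
set Y := invmx (X + E).
have YE : Y = invmx (1%:M + W) *m Xi by rewrite /Y XE invmxM.
have hY : mxnorm Y <= 2 * n1 * K.
  rewrite YE; apply: (le_trans (mxnormM _ _)); exact: ler_wpM2r.
set D := Y *m E *m Xi.
have YD : Y = Xi - D.
  apply/eqP; rewrite eq_sym subr_eq /D -{1}[Y]mulmx1 -[1%:M](mulmxV uX) mulmxA.
  by rewrite -mulmxDl -mulmxDr /Y mulVmx // mul1mx.
have rem : P0 - Q1 *m Y *m Q2 - (P0 - Q1 *m Xi *m Q2) - Q1 *m Xi *m E *m Xi *m Q2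
    = - (Q1 *m Y *m E *m Xi *m E *m Xi *m Q2).
  rewrite {1}YD mulmxBr mulmxBl zmod_rem.
  rewrite /D !mulmxA -!mulmxBl -mulmxBr.
  have -> : Y - Xi = - (Y *m E *m Xi) by rewrite {1}YD addrAC subrr add0r.
  by rewrite !mulmxN !mulNmx !mulmxA.
rewrite rem mxnormN.
apply: (@le_trans _ _ (mxnorm Q1 * (2 * n1 * K) * nE * K * nE * K * mxnorm Q2)).
  do 5 (apply: (le_trans (mxnormM _ _)); apply: ler_pM => //; try exact: mxnorm_ge0).
  apply: (le_trans (mxnormM _ _)); apply: ler_pM => //; exact: mxnorm_ge0.
have -> : mxnorm Q1 * (2 * n1 * K) * nE * K * nE * K * mxnorm Q2 = (nE * M) * nE.
  by rewrite /M; ring.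
exact: ler_wpM2r.
Qed.


Lemma eig1_unit n (M : 'M[C]_n) : eigenvalue M 1 <-> (1%:M - M) \notin unitmx.
Proof.
split.
  move/eigen_colP=> [x nx hx]; apply: (ker_notunit nx).
  by rewrite mulmxBl mul1mx hx scale1r subrr.
move/notunit_ker=> [x nx hx]; apply/eigen_colP; exists x => //.
by rewrite scale1r; apply/eqP; rewrite eq_sym -subr_eq0 -[X in X - _]mul1mx -mulmxBl hx.
Qed.

End H.

Unset Implicit Arguments.

Theorem mainTheorem3 (R : rcfType) (d : nat) (H0 H1 : 'M[R[i]]_d) :
  H0 \in unitmx ->
  let P0 := H0 *m ctrmx H0 + H1 *m ctrmx H1 in
  let P1 := H0 *m ctrmx H1 in
  let P := fun z : R[i] => z^-1 *: ctrmx P1 + P0 + z *: P1 in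
  let Xbar := H0 *m ctrmx H0 in
  let A := H1 *m invmx H0 in
  let g := fun X : 'M[R[i]]_d => P0 - ctrmx P1 *m invmx X *m P1 in
  let J := kron (cconjmx A) A in
  let detP_vanishes_on_circle := exists theta : R[i], `|theta| = 1 /\ \det (P theta) = 0 in
  [/\ (* (a) *) g Xbar = Xbar /\ H1 = ctrmx P1 *m invmx (ctrmx H0),
      (* (b) *) exists Dg : 'M[R[i]]_d -> 'M[R[i]]_d,
                  frechet_deriv g Xbar Dg /\ (forall E, vec (Dg E) = J *m vec E),
      (* (c) *) detP_vanishes_on_circle -> eigenvalue J 1,
      (* (d) *) spec_rad_le A 1 -> eigenvalue J 1 -> detP_vanishes_on_circle
    & (* consequence *)
      spec_rad_le A 1 ->
        (detP_vanishes_on_circle <-> spec_rad_eq J 1) /\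
        (spec_rad_eq J 1 <-> (1%:M - J) \notin unitmx)].
Proof.
move=> uH0 P0 P1 P Xbar A g J detPv.
have uH0s : ctrmx H0 \in unitmx by rewrite ctrmx_unit.
have cP1 : ctrmx P1 = H1 *m ctrmx H0 by rewrite /P1 ctrmxM ctrmxK.
have iX : invmx Xbar = invmx (ctrmx H0) *m invmx H0 by rewrite /Xbar invmxM.
have uX : Xbar \in unitmx by rewrite /Xbar unitmx_mul uH0 uH0s.
have hA1 : ctrmx P1 *m invmx Xbar = A.
  by rewrite cP1 iX mulmxA -(mulmxA H1) mulmxV // mulmx1.
have hA2 : invmx Xbar *m P1 = ctrmx A.
  by rewrite iX /P1 -mulmxA (mulmxA (invmx H0)) mulVmx // mul1mx /A ctrmxM ctrmx_inv.
have circ : detPv <-> exists2 nu, eigenvalue A nu & `|nu| = 1.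
  split.
    move=> [t [nt dt]]; exists (- t); last by rewrite normrN.
    by rewrite /A -detP_eig //; apply/eqP; move: dt; rewrite /P /P0 /P1.
  move=> [nu enu nnu]; exists (- nu); split; first by rewrite normrN.
  have nnu' : `|- nu| = 1 by rewrite normrN.
  apply/eqP; rewrite /P /P0 /P1 (detP_eig H1 uH0 nnu') opprK //.
have hc : detPv -> eigenvalue J 1.
  by move/circ => [nu enu nnu]; exact: eigJ_circle enu nnu.
have hd : spec_rad_le A 1 -> eigenvalue J 1 -> detPv.
  move=> sA eJ; apply/circ; have [E nE hE] := (eigenJ A 1).1 eJ.
  have [nu enu /andP [h1 h2]] := key2 sA (oner_neq0 _) nE hE.
  exists nu => //; apply/eqP; rewrite eq_le h2 /=; move: h1; rewrite normr1.
  done.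
split => //.
- split.
    by rewrite /g hA1 /A /P1 -mulmxA (mulmxA (invmx H0)) mulVmx // mul1mx /P0 addrK.
  by rewrite cP1 mulmxK.
- exists (fun E => ctrmx P1 *m invmx Xbar *m E *m invmx Xbar *m P1); split.
    exact: frechet_g uX.
  by move=> E; rewrite /J Jvec hA1 -mulmxA hA2.
- move=> sA.
  have e1 : detPv <-> spec_rad_eq J 1.
    split.
      move=> hdv; split; last by exists 1; [exact: hc | rewrite normr1].
      move=> l el; have [->|nl] := eqVneq l 0; first by rewrite normr0 ler01.
      have [E nE hE] := (eigenJ A l).1 el.
      have [nu _ /andP [h1 h2]] := key2 sA nl nE hE.
      exact: le_trans h1 h2.
    move=> [_ [l el nl]]; apply/circ.
    have l0 : l != 0 by rewrite -normr_eq0 nl oner_eq0.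
    have [E nE hE] := (eigenJ A l).1 el.
    have [nu enu /andP [h1 h2]] := key2 sA l0 nE hE.
    exists nu => //; apply/eqP; rewrite eq_le h2 /=; move: h1; rewrite nl.
    done.
  split => //; split.
    by move=> /e1 /hc /eig1_unit.
  by move=> /eig1_unit /(hd sA) /e1.
Qed.
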